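(* Let $\beta$ be a non-negative integer and $k$ a positive integer. If $\beta+k\equiv 0 \pmod{q-1}$, then $L(\chi_t^\beta,-k)=0$; if $\beta+k\not\equiv 0\pmod{q-1}$, then $L(\chi_t^\beta,-k)\neq 0$. Moreover, whenever $\beta+k\equiv 0\pmod{q-1}$, the zero is simple: the derivative $\frac{\partial}{\partial x}z(\chi_t^\beta,x,-k)$ does not vanish at $x=1$.
   Context: Let $q$ be a power of a prime $p$, $A=\mathbb{F}_q[\theta]$, and $A_+(d)$ the set of monic polynomials in $A$ of degree $d$. Let $t$ be an indeterminate and $\chi_t:A\to\mathbb{F}_q[t]$ the $\mathbb{F}_q$-algebra morphism with $\theta\mapsto t$; $\chi_t(a)^0:=1$. For non-negative integers $\beta,k,d$ let $S_d(\chi_t^\beta,k):=\sum_{a\in A_+(d)}\chi_t(a)^\beta a^k\in A[t]$. It is known that $S_d(\chi_t^\beta,k)=0$ for $d$ sufficiently large, so the special polynomial $z(\chi_t^\beta,x,-k):=\sum_{d\ge0}x^{-d}S_d(\chi_t^\beta,k)$ lies in $A[t][x^{-1}]$. Define $L(\chi_t^\beta,-k):=z(\chi_t^\beta,1,-k)\in A[t]$ (the value of Pellarin's $L$-series at $-k$). *)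

(* Defs.v *)
From HB Require Import structures.
From mathcomp Require Import all_boot all_order all_algebra.
Set Implicit Arguments. Unset Strict Implicit. Unset Printing Implicit Defensive.
Import GRing.Theory.
Local Open Scope ring_scope.

(* F = F_q (any finite field, q = #|F|), A = F[theta] = {poly F},
   A[t] = {poly {poly F}} (polynomials in t with coefficients in A). *)

(* The monic polynomial of degree d with lower coefficients c. Every monic
   polynomial of degree d arises from exactly one c : {ffun 'I_d -> F}. *)
Definition monic_of (F : finFieldType) (d : nat) (c : {ffun 'I_d -> F}) : {poly F} :=
  'X^d + \sum_(i < d) c i *: 'X^i.

(* chi_t : A -> F_q[t] subset A[t], theta |-> t (coefficients become constants of A). *)
Definition chi_t (F : finFieldType) (a : {poly F}) : {poly {poly F}} :=
  map_poly polyC a.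

Definition Sd (F : finFieldType) (beta k d : nat) : {poly {poly F}} :=
  \sum_(c : {ffun 'I_d -> F}) (chi_t (monic_of c)) ^+ beta * ((monic_of c)%:P) ^+ k.

(* Truncation of z(chi_t^beta, x, -k) = sum_d x^{-d} S_d evaluated at x = 1:
   sum_{d < N} S_d.  Equals L(chi_t^beta,-k) once S_d = 0 for all d >= N. *)
Definition Ltrunc (F : finFieldType) (beta k N : nat) : {poly {poly F}} :=
  \sum_(d < N) Sd F beta k d.

(* d/dx z(chi_t^beta, x, -k) at x = 1, truncated:
   d/dx (x^{-d}) = -d x^{-d-1}, which is -d at x = 1. *)
Definition dzdx_at1_trunc (F : finFieldType) (beta k N : nat) : {poly {poly F}} :=
  \sum_(d < N) (- (d%:R)) * Sd F beta k d.

(* Main.v *)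
Require Import Defs.
From mathcomp Require Import all_boot all_order all_algebra all_fingroup all_solvable all_field.
Set Implicit Arguments. Unset Strict Implicit. Unset Printing Implicit Defensive.
Import GRing.Theory FinRing.Theory.
Local Open Scope ring_scope.

Section FF.
Variable F : finFieldType.

Lemma cardF0 : (#|F|%:R : F) = 0.
Proof.
have := expg_cardG (in_setT (1 : F)).
by rewrite cardsT zmodXgE.
Qed.

Lemma qgt1 : (1 < #|F|)%N.
Proof. exact: finNzRing_gt1. Qed.

Lemma exists_gen : exists u : F, u != 0 /\ forall m, u ^+ m = 1 -> (#|F|.-1 %| m)%N.
Proof.
have := field_unit_group_cyclic [set: {unit F}]%G.
case/cyclicP => x Hx.
exists (val x); split.
  by rewrite -unitfE; exact: (valP x).
move=> m Hm.
have H1 : (x ^+ m = 1)%g.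
  by apply: val_inj; rewrite val_unitX Hm.
rewrite -card_finField_unit Hx -/(order x).
by rewrite order_dvdn H1.
Qed.

Lemma pow_q1 (x : F) : x != 0 -> x ^+ #|F|.-1 = 1.
Proof.
move=> nz; apply: (mulIf nz); rewrite mul1r -exprSr prednK ?expf_card //.
exact: ltnW qgt1.
Qed.

Lemma sum_pow m : \sum_(x : F) x ^+ m =
  if (0 < m)%N && (#|F|.-1 %| m)%N then -1 else 0.
Proof.
case: ifP => [/andP[m0 dv]|H].
  rewrite (bigD1 0) //= expr0n eqn0Ngt m0 add0r.
  rewrite (eq_bigr (fun _ => 1)); last first.
    move=> x nz; case/dvdnP: dv => c ->; by rewrite mulnC exprM pow_q1 // expr1n.
  rewrite sumr_const cardC1; apply/eqP.
  by rewrite -subr_eq0 opprK -mulrSr prednK ?(ltnW qgt1) // cardF0.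
  have [m0|m0] := posnP m.
  by rewrite m0 (eq_bigr (fun _ => 1)) ?sumr_const ?cardT ?cardE // ; rewrite -cardE cardF0.
have [u [nzu Hu]] := exists_gen.
have ndv : ~~ (#|F|.-1 %| m)%N by rewrite m0 /= in H; rewrite H.
have um : u ^+ m != 1 by apply/eqP => /Hu; apply/negP.
have: \sum_(x : F) x ^+ m = u ^+ m * \sum_(x : F) x ^+ m.
  rewrite mulr_sumr (reindex_inj (mulfI nzu)) /=.
  by apply: eq_bigr => x _; rewrite exprMn.
move/eqP; rewrite -subr_eq0 -{1}[\sum_x _]mul1r -mulrBl mulf_eq0 subr_eq0 eq_sym (negbTE um) /=.
by move/eqP.
Qed.


Definition ev (p : {poly {poly F}}) : F := (p.[0]).[0].

Lemma evD p q : ev (p + q) = ev p + ev q.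
Proof. by rewrite /ev !hornerD. Qed.
Lemma evM p q : ev (p * q) = ev p * ev q.
Proof. by rewrite /ev !hornerM. Qed.
Lemma evX p m : ev (p ^+ m) = ev p ^+ m.
Proof. by rewrite /ev !horner_exp. Qed.
Lemma ev_sum (I : finType) (G : I -> {poly {poly F}}) : ev (\sum_i G i) = \sum_i ev (G i).
Proof. by rewrite /ev !horner_sum. Qed.
Lemma evN p : ev (- p) = - ev p.
Proof. by rewrite /ev !hornerN. Qed.
Lemma ev_nat m : ev m%:R = m%:R.
Proof. by rewrite /ev -!polyC_natr !hornerC. Qed.

Variables beta k : nat.

Definition fP (a : {poly F}) : {poly {poly F}} := chi_t a ^+ beta * a%:P ^+ k.

Lemma ev_fP a : ev (fP a) = (a`_0) ^+ (beta + k).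
Proof.
rewrite /fP evM !evX exprD; congr (_ ^+ _ * _ ^+ _).
  by rewrite /ev /chi_t !horner_coef0 coef_map /= coefC.
by rewrite /ev hornerC horner_coef0.
Qed.

Lemma SdE d : Sd F beta k d = \sum_(c : {ffun 'I_d -> F}) fP (monic_of c).
Proof. by []. Qed.

Lemma coef0_monic d (c : {ffun 'I_d.+1 -> F}) : (monic_of c)`_0 = c ord0.
Proof.
rewrite /monic_of coefD coefXn /= add0r coef_sum big_ord_recl /= coefZ coefXn /= mulr1.
by rewrite big1 ?addr0 // => i _; rewrite coefZ coefXn /= mulr0.
Qed.

Lemma evS0 : ev (Sd F beta k 0) = 1.
Proof.
rewrite SdE ev_sum (eq_bigr (fun _ => 1)); last first.
  by move=> c _; rewrite ev_fP /monic_of big_ord0 addr0 expr0 coefC expr1n.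
by rewrite sumr_const card_ffun card_ord expn0.
Qed.

Lemma evSS d : ev (Sd F beta k d.+1) = (\sum_(x : F) x ^+ (beta + k)) * (#|F|%:R) ^+ d.
Proof.
rewrite SdE ev_sum.
pose G (i : 'I_d.+1) (x : F) := if i == ord0 then x ^+ (beta + k) else 1.
transitivity (\sum_(c : {ffun 'I_d.+1 -> F}) \prod_i G i (c i)).
  apply: eq_bigr => c _; rewrite ev_fP coef0_monic big_ord_recl /G eqxx.
  by rewrite big1 ?mulr1 // => i _; rewrite eq_sym (negbTE (neq_lift _ _)).
rewrite -bigA_distr_bigA big_ord_recl /G eqxx /=; congr (_ * _).
rewrite (eq_bigr (fun _ => #|F|%:R)) ?prodr_const ?card_ord // => i _.
by rewrite sumr_const cardT -cardE.
Qed.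


Local Notation R := {poly {poly F}}.

Lemma sum_prod_vanish (n M : nat) (W : 'I_n -> 'I_M -> R) :
  (n < M * #|F|.-1)%N ->
  \sum_(g : {ffun 'I_M -> F}) \prod_(j < n) \sum_(i < M) (g i)%:P%:P * W j i = 0.
Proof.
move=> Hn.
under eq_bigr do rewrite bigA_distr_bigA.
rewrite exchange_big /=; apply: big1 => s _.
under eq_bigr do rewrite big_split /=.
rewrite -mulr_suml.
suff -> : \sum_(g : {ffun 'I_M -> F}) \prod_(j < n) (g (s j))%:P%:P = 0 by rewrite mul0r.
have -> : \sum_(g : {ffun 'I_M -> F}) \prod_(j < n) (g (s j))%:P%:P =
   ((\sum_(g : {ffun 'I_M -> F}) \prod_(j < n) g (s j))%:P)%:P.
  by rewrite !rmorph_sum; apply: eq_bigr => g _; rewrite !rmorph_prod.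
suff -> : \sum_(g : {ffun 'I_M -> F}) \prod_(j < n) g (s j) = 0 by rewrite !polyC0.
pose m (i : 'I_M) := #|[pred j | s j == i]|.
have Hprod (g : {ffun 'I_M -> F}) : \prod_(j < n) g (s j) = \prod_(i < M) g i ^+ m i.
  rewrite (partition_big s predT) //=; apply: eq_bigr => i _.
  rewrite (eq_bigr (fun _ => g i)) ?prodr_const // => j /eqP ->; done.
under eq_bigr do rewrite Hprod.
rewrite -(bigA_distr_bigA (fun i (x : F) => x ^+ m i)).
have Hsum : (\sum_(i < M) m i = n)%N.
  transitivity (\sum_(j < n) 1)%N; last by rewrite sum1_card card_ord.
  rewrite (partition_big s predT) //=; apply: eq_bigr => i _.
  by rewrite sum1_card.
case: (pickP [pred i | (m i < #|F|.-1)%N]) => [i0 Hi0 | Hall]; last first.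
  have : (M * #|F|.-1 <= n)%N.
    rewrite -Hsum -[X in (X * _)%N]card_ord -sum_nat_const.
    by apply: leq_sum => i _; have := Hall i; rewrite /= ltnNge => /negbFE.
  by rewrite leqNgt Hn.
rewrite (bigD1 i0) //= sum_pow.
case: ifP => [/andP[m0 dv] | _]; last by rewrite mul0r.
by move: Hi0; rewrite /= ltnNge dvdn_leq.
Qed.


Definition Pg M (g : {ffun 'I_M -> F}) : {poly F} := \sum_(i < M) g i *: 'X^i.
Definition T M := \sum_(g : {ffun 'I_M -> F}) fP (Pg g).

Lemma chiP M (g : {ffun 'I_M -> F}) : chi_t (Pg g) = \sum_(i < M) (g i)%:P%:P * 'X^i.
Proof.
rewrite /chi_t /Pg raddf_sum; apply: eq_bigr => i _.
by rewrite /= map_polyZ map_polyXn mul_polyC.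
Qed.

Lemma PCP M (g : {ffun 'I_M -> F}) : (Pg g)%:P = \sum_(i < M) (g i)%:P%:P * ('X^i)%:P.
Proof.
rewrite /Pg rmorph_sum; apply: eq_bigr => i _.
by rewrite /= -mul_polyC rmorphM.
Qed.

Definition Wf M (j : 'I_(beta + k)) (i : 'I_M) : R :=
  if (j < beta)%N then 'X^i else ('X^i)%:P.

Lemma fP_expand M (g : {ffun 'I_M -> F}) :
  fP (Pg g) = \prod_(j < beta + k) \sum_(i < M) (g i)%:P%:P * Wf j i.
Proof.
rewrite big_split_ord /fP; congr (_ * _).
  rewrite (eq_bigr (fun _ => chi_t (Pg g))) ?prodr_const ?card_ord // => j _.
  by rewrite chiP /Wf /= ltn_ord.
rewrite (eq_bigr (fun _ => (Pg g)%:P)) ?prodr_const ?card_ord // => j _.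
by rewrite PCP /Wf /= ltnNge leq_addr.
Qed.

Lemma T_vanish M : (beta + k < M * #|F|.-1)%N -> T M = 0.
Proof.
move=> H; rewrite /T; under eq_bigr do rewrite fP_expand.
exact: sum_prod_vanish.
Qed.

Definition ext M (g : {ffun 'I_M -> F}) (x : F) : {ffun 'I_M.+1 -> F} :=
  [ffun i => if unlift ord_max i is Some j then g j else x].

Lemma sum_split M (h : {ffun 'I_M.+1 -> F} -> R) :
  \sum_g h g = \sum_(x : F) \sum_(g : {ffun 'I_M -> F}) h (ext g x).
Proof.
rewrite pair_big /=.
rewrite (reindex (fun p : F * {ffun 'I_M -> F} => ext p.2 p.1)) //.
exists (fun g : {ffun 'I_M.+1 -> F} => (g ord_max, [ffun j => g (lift ord_max j)])).
  move=> [x g] _ /=; congr (_, _).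
    by rewrite /ext ffunE unlift_none.
  by apply/ffunP => j; rewrite !ffunE liftK.
move=> g _ /=; apply/ffunP => i; rewrite /ext !ffunE.
by case: unliftP => [j -> | ->]; rewrite ?ffunE.
Qed.

Lemma Pg_ext M (g : {ffun 'I_M -> F}) x : Pg (ext g x) = Pg g + x *: 'X^M.
Proof.
rewrite /Pg big_ord_recr /= /ext ffunE unlift_none; congr (_ + _).
apply: eq_bigr => i _; rewrite ffunE.
have -> : widen_ord (leqnSn M) i = lift ord_max i.
  by apply: val_inj; rewrite /= /bump leqNgt ltn_ord.
by rewrite liftK.
Qed.

Lemma fPZ x a : fP (x *: a) = ((x ^+ (beta + k))%:P)%:P * fP a.
Proof.
rewrite /fP /chi_t map_polyZ /= -!mul_polyC polyCM !exprMn.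
rewrite exprD !rmorphM !rmorphXn /=.
by rewrite !mulrA; congr (_ * _); rewrite -!mulrA; congr (_ * _); rewrite mulrC.
Qed.

Lemma R_q1 : ((#|F|.-1)%:R : R) = -1.
Proof.
apply/eqP; rewrite -subr_eq0 opprK -mulrSr prednK; last exact: ltnW qgt1.
by rewrite -!polyC_natr cardF0 !polyC0.
Qed.

Lemma T_rec M : (#|F|.-1 %| beta + k)%N -> T M.+1 = T M - Sd F beta k M.
Proof.
move=> dv; rewrite /T sum_split (bigD1 0) //=.
under eq_bigr do rewrite Pg_ext scale0r addr0.
congr (_ + _).
rewrite (eq_bigr (fun _ => Sd F beta k M)).
  by rewrite sumr_const cardC1 -mulr_natr R_q1 mulrN1.
move=> x nzx.
have Hx : x ^+ (beta + k) = 1.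
  by case/dvdnP: dv => c ->; rewrite mulnC exprM pow_q1 // expr1n.
pose sc (c : F) (g : {ffun 'I_M -> F}) := [ffun i => c * g i].
rewrite SdE [RHS](reindex_inj (h := sc x^-1)) /=; last first.
  move=> g1 g2 /ffunP E; apply/ffunP => i; have := E i; rewrite !ffunE.
  by apply: mulrI; rewrite unitfE invr_eq0.
apply: eq_bigr => g _.
rewrite Pg_ext.
have -> : Pg g + x *: 'X^M = x *: monic_of (sc x^-1 g).
  rewrite /monic_of scalerDr addrC; congr (_ + _).
  rewrite /Pg scaler_sumr; apply: eq_bigr => i _.
  by rewrite ffunE scalerA mulrA divff // mul1r.
by rewrite fPZ Hx mul1r.
Qed.

Lemma T0 : (0 < k)%N -> T 0 = 0.
Proof.
move=> k0; rewrite /T big1 // => g _.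
by rewrite /Pg big_ord0 /fP polyC0 expr0n -(prednK k0) /= mulr0.
Qed.

Lemma T_L M : (0 < k)%N -> (#|F|.-1 %| beta + k)%N -> T M = - Ltrunc F beta k M.
Proof.
move=> k0 dv; elim: M => [|M IH].
  by rewrite T0 // /Ltrunc big_ord0 oppr0.
by rewrite T_rec // IH /Ltrunc big_ord_recr /= opprD.
Qed.

End FF.

Unset Implicit Arguments.

Theorem theorem2p0p3 (F : finFieldType) (beta k N : nat) :
  (0 < k)%N ->
  (forall d : nat, (N <= d)%N -> Sd F beta k d = 0) ->
  (((#|F|).-1 %| beta + k)%N ->
     Ltrunc F beta k N = 0 /\ dzdx_at1_trunc F beta k N != 0) /\
  (~~ ((#|F|).-1 %| beta + k)%N -> Ltrunc F beta k N != 0).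
Proof.
move=> k0 HN.
have ev0 : ev (0 : {poly {poly F}}) = 0 by rewrite /ev !horner0.
have Lext M : (N <= M)%N -> Ltrunc F beta k M = Ltrunc F beta k N.
  move=> le; rewrite /Ltrunc -(subnKC le) big_split_ord /=.
  rewrite [X in _ + X]big1 ?addr0 // => i _; apply: HN; exact: leq_addr.
have q1 : (0 < #|F|.-1)%N by rewrite -subn1 subn_gt0 (qgt1 F).
split.
- move=> dv; split.
    rewrite -(Lext (N + (beta + k).+1)) ?leq_addr //.
    apply/eqP; rewrite -oppr_eq0 -T_L // T_vanish //.
    apply: (leq_trans _ (leq_pmulr _ q1)); exact: leq_addl.
  have S1 : Sd F beta k 1 != 0.
    apply/eqP => E; have := evSS F beta k 0; rewrite E ev0 sum_pow dv.
    rewrite addn_gt0 k0 orbT /= expr0 mulr1 => /eqP; rewrite eq_sym oppr_eq0.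
    by rewrite oner_eq0.
  have N2 : (1 < N)%N.
    rewrite ltnNge; apply/negP => le; by rewrite HN ?eqxx in S1.
  have [N' EN] : exists N', N = N'.+2 by exists N.-2; rewrite -subn2 -addn2 subnK.
  rewrite EN; apply/eqP => E; have := congr1 (@ev F) E.
  rewrite /dzdx_at1_trunc ev_sum big_ord_recl big_ord_recl /= big1; last first.
    move=> i _; rewrite /bump !leq0n !add1n evM evN ev_nat evSS cardF0 expr0n /=.
    by rewrite !mulr0.
  rewrite /bump !leq0n !add1n !evM !evN !ev_nat evS0 evSS sum_pow dv addn_gt0 k0 orbT /=.
  rewrite expr0 !mulr1 mulr0n mulr1n oppr0 add0r addr0 mulN1r opprK => /eqP.
  by rewrite oner_eq0.
- move=> ndv; have N1 : (0 < N)%N.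
    rewrite ltnNge; apply/negP => le.
    by have := evS0 F beta k; rewrite HN // ev0 => /eqP; rewrite eq_sym oner_eq0.
  have [N' EN] : exists N', N = N'.+1 by exists N.-1; rewrite prednK.
  rewrite EN; apply/eqP => E; have := congr1 (@ev F) E.
  rewrite /Ltrunc ev_sum big_ord_recl /= big1; last first.
    by move=> i _; rewrite /bump !leq0n !add1n evSS sum_pow (negbTE ndv) andbF mul0r.
  rewrite evS0 addr0 ev0 => /eqP; by rewrite oner_eq0.
Qed.
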